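(* Let $g\in\omega^\omega$ with $g(k)>0$ for all $k$ and $g$ tending to infinity. Then $\mathfrak c_{\omega,g}=\mathfrak c_{\omega,\mathcal C}$.
   Context: A slalom is a sequence $S=\langle S_k\mid k<\omega\rangle$ of finite subsets of $\omega$; $x\in\omega^\omega$ is captured by $S$, written $x\in^*S$, if $x(k)\in S_k$ for all but finitely many $k$. $\mathfrak c_{\omega,g}:=\min\{|\mathcal S|:\mathcal S\subseteq\prod_{k<\omega}[\omega]^{\le g(k)},\ \forall x\in\omega^\omega\ \exists S\in\mathcal S: x\in^*S\}$. $\mathcal C$ is the set of all slaloms $S$ with $\sum_{k\ge1}|S_k|/k^2<\infty$, and $\mathfrak c_{\omega,\mathcal C}:=\min\{|\mathcal S|:\mathcal S\subseteq\mathcal C,\ \forall x\in\omega^\omega\ \exists S\in\mathcal S: x\in^*S\}$. *)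

(* Defs.v *)
From mathcomp Require Import all_boot all_algebra.
From mathcomp Require Import finmap.
From mathcomp Require Import boolp classical_sets cardinality.
Set Implicit Arguments. Unset Strict Implicit. Unset Printing Implicit Defensive.
Import GRing.Theory Num.Theory.
Local Open Scope fset_scope.

Definition slalom := nat -> {fset nat}.

Definition captured (x : nat -> nat) (S : slalom) : Prop :=
  exists N, forall k, (N <= k)%N -> x k \in S k.

Definition g_slalom (g : nat -> nat) (S : slalom) : Prop :=
  forall k, (#|` S k| <= g k)%N.

(* S \in C : sum_{k>=1} |S_k| / k^2 < oo  (nonnegative terms: bounded partial sums) *)
Definition in_C (S : slalom) : Prop :=
  exists M : rat, forall n : nat,
    (\sum_(1 <= k < n) ((#|` S k|)%:R / (k ^ 2)%:R) <= M)%R.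

Definition covering (P : slalom -> Prop) (F : set slalom) : Prop :=
  (forall S, F S -> P S) /\ (forall x : nat -> nat, exists S, F S /\ captured x S).

(* Main.v *)
Require Import Defs.
From mathcomp Require Import all_boot all_algebra.
From mathcomp Require Import finmap.
From mathcomp Require Import boolp classical_sets cardinality.
From mathcomp Require Import ring lra zify.
Import mathcomp.order.order.Order.TTheory GRing.Theory Num.Theory.
Local Open Scope fset_scope.
Local Open Scope ring_scope.

Lemma card_imfs (S : {fset nat}) (f : nat -> nat) : (#|` [fset f s | s in S]| <= #|` S|)%N.
Proof. exact: (leq_imfset_card _ f (mem S)). Qed.

Definition dec (s : nat) : seq nat := odflt [::] (choice.unpickle s : option (seq nat)).
Definition code (B : nat -> nat) (x : nat -> nat) (n : nat) : nat := choice.pickle (mkseq x (B n)).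
Definition Tr (idx : nat -> nat) (cond : nat -> {fset nat} -> bool) (S : slalom) : slalom :=
  fun k => if cond k (S (idx k)) then [fset nth 0%N (dec s) k | s in S (idx k)] else fset0.

Lemma Tr_card idx cond S k : (#|` Tr idx cond S k| <= if cond k (S (idx k)) then #|` S (idx k)| else 0)%N.
Proof. rewrite /Tr; case: ifP => _; [exact: card_imfs | by rewrite cardfs0]. Qed.

Lemma Tr_capt idx B (cond : nat -> {fset nat} -> bool) S x :
  (forall n k, (B n <= k)%N -> (n < idx k)%N) ->
  (exists K, forall k, (K <= k)%N -> cond k (S (idx k))) ->
  captured (code B x) S -> captured x (Tr idx cond S).
Proof.
move=> H [K HK] [N HN]; exists (maxn K (B N)) => k; rewrite geq_max => /andP[Kk Bk].
rewrite /Tr HK //.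
have Hi : (N <= idx k)%N by apply: ltnW; apply: H.
have kB : (k < B (idx k))%N.
  by rewrite ltnNge; apply/negP => /H; rewrite ltnn.
have -> : x k = nth 0%N (dec (code B x (idx k))) k.
  by rewrite /dec /code choice.pickleK /= nth_mkseq.
by apply: in_imfset; apply: HN.
Qed.

Definition idxP (P : nat -> nat -> bool) (k : nat) : nat := \max_(j < k.+1 | P j k) j.

Lemma idxP_ge (P : nat -> nat -> bool) n k : (n <= k)%N -> P n k -> (n <= idxP P k)%N.
Proof. move=> nk Pn; rewrite /idxP; exact: (@leq_bigmax_cond _ (fun j : 'I_k.+1 => P j k) (fun j => nat_of_ord j) (Ordinal (n:=k.+1) (m:=n) nk)). Qed.

Lemma idxP_le (P : nat -> nat -> bool) k : (idxP P k <= k)%N.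
Proof. rewrite /idxP; apply: (big_ind (fun m => m <= k)%N) => //.
- by move=> a b ? ?; rewrite geq_max; apply/andP.
- by move=> i _; rewrite -ltnS.
Qed.

Lemma idxP_P (P : nat -> nat -> bool) k : P 0%N k -> P (idxP P k) k.
Proof. move=> P0; rewrite /idxP; apply: (big_ind (fun m => P m k)) => //.
by move=> a b ? ?; rewrite /maxn; case: ifP.
Qed.

Lemma tele (m n : nat) : (0 < m)%N ->
  \sum_(1 <= k < n) (((m <= k)%N : nat)%:R / (k ^ 2)%:R : rat) <= 2 / m%:R - 2 / (maxn n m)%:R.
Proof.
move=> m0; elim: n => [|n IH].
  by rewrite big_geq // max0n subrr.
case: n IH => [|n] IH.
  by rewrite big_geq // (maxn_idPr m0) subrr.
rewrite big_nat_recr //=.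
case: (leqP m n.+1) => mn.
- rewrite (maxn_idPl mn) in IH.
  rewrite (maxn_idPl (leq_trans mn (leqnSn _))) /=.
  apply: le_trans (lerD IH (lexx _)) _.
  rewrite -!addrA lerD2l.
  have x0 : (0 : rat) < n.+1%:R by rewrite ltr0n.
  set x := n.+1%:R in x0 *.
  have -> : n.+2%:R = x + 1 :> rat by rewrite /x -natr1.
  rewrite natrX -/x mul1r.
  rewrite -subr_ge0.
  have -> : - (2 / (x + 1)) - (- (2 / x) + x ^- 2) = (x - 1) / (x ^+ 2 * (x + 1)).
    field. have h := ler0n rat n. by apply/andP; split; rewrite gt_eqF //; lra.
  apply: divr_ge0; first by rewrite subr_ge0 /x ler1n.
  by apply: mulr_ge0; [apply: exprn_ge0; apply: ltW | apply: addr_ge0 => //; apply: ltW].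
- rewrite (maxn_idPr (ltnW mn)) in IH.
  rewrite (maxn_idPr mn) /=.
  by rewrite mul0r addr0.
Qed.

Lemma tele2 n : \sum_(0 <= j < n) (2 / ((j.+1 * j.+2)%:R) : rat) = 2 - 2 / n.+1%:R.
Proof.
elim: n => [|n IH]; first by rewrite big_geq // divr1 subrr.
rewrite big_nat_recr //= IH.
have -> : n.+2%:R = n.+1%:R + 1 :> rat by rewrite -natr1.
rewrite natrM.
have -> : n.+2%:R = n.+1%:R + 1 :> rat by rewrite -natr1.
have x0 : (0 : rat) < n.+1%:R by rewrite ltr0n.
field. have h := ler0n rat n. by apply/andP; split; rewrite gt_eqF //; lra.
Qed.

Section Transfer.
Local Open Scope classical_set_scope.
Lemma transfer (P Q : slalom -> Prop) (T : slalom -> slalom) (c : (nat -> nat) -> (nat -> nat)) :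
  (forall S, P S -> Q (T S)) ->
  (forall S x, P S -> captured (c x) S -> captured x (T S)) ->
  forall F, covering P F -> exists G, covering Q G /\ (G #<= F)%card.
Proof.
move=> PQ Pc F [FP Fc]; exists (T @` F); split; [split|].
- by move=> _ [S FS <-]; apply/PQ/FP.
- move=> x; have [S [FS cS]] := Fc (c x).
  by exists (T S); split; [exists S | apply: Pc => //; apply: FP].
- exact: card_image_le.
Qed.
End Transfer.

Lemma elem_le_sum (n i : nat) (F : nat -> nat) : (i < n)%N -> (F i <= \sum_(0 <= j < n) F j)%N.
Proof.
move=> iN; rewrite (bigD1_seq i) /= ?mem_index_iota ?iota_uniq //; exact: leq_addr.
Qed.

Section Dir1.
Variable g : nat -> nat.
Hypothesis g_pos : forall k, (0 < g k)%N.
Let a j := (g j * (j.+1 * j.+2))%N.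
Let Pa j k := (a j <= k)%N.
Let idx := idxP Pa.
Let B j := (j.+1 + a j.+1)%N.
Let cond k (A : {fset nat}) := (a (idx k) <= k)%N.

Lemma d1_H n k : (B n <= k)%N -> (n < idx k)%N.
Proof. rewrite /B => h; apply: idxP_ge; rewrite /Pa; lia. Qed.

Lemma d1_cap S x : captured (code B x) S -> captured x (Tr idx cond S).
Proof.
apply: Tr_capt; first exact: d1_H.
exists (a 0%N) => k k0; rewrite /cond; exact: (@idxP_P Pa k).
Qed.

Lemma d1_card S k n : g_slalom g S -> (k < n)%N ->
  (#|` Tr idx cond S k| <= \sum_(0 <= j < n) ((a j <= k)%N : nat) * g j)%N.
Proof.
move=> gS kn; apply: leq_trans (Tr_card _ _ _ _) _.
case: ifP => // cd; apply: leq_trans (gS _) _.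
have := @elem_le_sum n (idx k) (fun j => ((a j <= k)%N : nat) * g j)%N.
move: cd; rewrite /cond => -> /=; rewrite mul1n; apply.
exact: leq_ltn_trans (idxP_le _ _) kn.
Qed.

Lemma d1_C S : g_slalom g S -> in_C (Tr idx cond S).
Proof.
move=> gS; exists 2 => n.
apply: (@le_trans _ _ (\sum_(1 <= k < n) ((\sum_(0 <= j < n) ((a j <= k)%N : nat) * g j)%N)%:R / (k ^ 2)%:R)).
  apply: ler_sum_nat => k /andP[_ kn]; apply: ler_wpM2r; first by rewrite invr_ge0 ler0n.
  by rewrite ler_nat; apply: d1_card.
under eq_bigr => k _ do rewrite natr_sum mulr_suml.
rewrite exchange_big_nat /=.
rewrite (_ : \sum_(0 <= j < n) _ = \sum_(0 <= j < n) (g j)%:R * \sum_(1 <= k < n) (((a j <= k)%N : nat)%:R / (k ^ 2)%:R)); last first.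
  apply: eq_bigr => j _; rewrite mulr_sumr; apply: eq_bigr => k _; rewrite natrM; ring.
apply: (@le_trans _ _ (\sum_(0 <= j < n) (2 / ((j.+1 * j.+2)%:R) : rat))); last first.
  by rewrite tele2 lerBlDr lerDl divr_ge0 ?ler0n.
apply: ler_sum_nat => j _.
have gj : (0 : rat) < (g j)%:R by rewrite ltr0n.
have aj : (0 < a j)%N by rewrite /a muln_gt0 g_pos.
apply: (@le_trans _ _ ((g j)%:R * (2 / (a j)%:R))).
  apply: ler_wpM2l; first exact: ltW.
  apply: le_trans (tele (a j) n aj) _.
  by rewrite lerBlDr lerDl divr_ge0 ?ler0n.
rewrite [X in X <= _](_ : _ = 2 / (j.+1 * j.+2)%:R) //.
rewrite /a natrM; field.
have h := ler0n rat j.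
by apply/and3P; split; rewrite gt_eqF //; lra.
Qed.

Lemma dir1 (F : set slalom) : covering (g_slalom g) F ->
  exists G : set slalom, covering in_C G /\ (G #<= F)%card.
Proof.
apply: (@transfer _ _ (Tr idx cond) (code B)).
- exact: d1_C.
- by move=> S x _; apply: d1_cap.
Qed.
End Dir1.

Lemma inC_bound (S : slalom) : in_C S -> exists Mn : nat, forall n, (0 < n)%N -> (#|` S n| <= Mn * n ^ 2)%N.
Proof.
move=> [M HM].
have M0 : 0 <= M by have := HM 0%N; rewrite big_geq.
exists (Num.Def.archi_bound M) => n n0.
have hM := archi_boundP M0.
have := HM n.+1; rewrite big_nat_recr //=.
have s0 : 0 <= \sum_(1 <= k < n) ((#|` S k|)%:R / (k ^ 2)%:R : rat).
  by apply: sumr_ge0 => k _; apply: divr_ge0; apply: ler0n.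
move=> h.
have h2 : (#|` S n|)%:R / (n ^ 2)%:R < ((Num.Def.archi_bound M)%:R : rat).
  apply: le_lt_trans hM; apply: le_trans h; by rewrite lerDr.
have n2 : (0 : rat) < (n ^ 2)%:R by rewrite ltr0n expn_gt0 n0.
rewrite ltr_pdivrMr // -natrM ltr_nat in h2.
exact: ltnW.
Qed.

Section Dir2.
Variable g : nat -> nat.
Hypothesis g_inf : forall m, exists N, forall k, (N <= k)%N -> (m <= g k)%N.
Let Ng m := projT1 (cid (g_inf m)).
Let NgP m k : (Ng m <= k)%N -> (m <= g k)%N := projT2 (cid (g_inf m)) k.
Let Pm n k := (n ^ 3 <= g k)%N.
Let idx := idxP Pm.
Let B n := maxn n.+1 (Ng (n.+1 ^ 3)).
Let cond k (A : {fset nat}) := (#|` A| <= g k)%N.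

Lemma d2_H n k : (B n <= k)%N -> (n < idx k)%N.
Proof. rewrite /B geq_max => /andP[h1 h2]; apply: idxP_ge => //; exact: NgP. Qed.

Lemma d2_g S : g_slalom g (Tr idx cond S).
Proof. move=> k; apply: leq_trans (Tr_card _ _ _ _) _; by case: ifP. Qed.

Lemma d2_cap S x : in_C S -> captured (code B x) S -> captured x (Tr idx cond S).
Proof.
move=> /inC_bound [Mn HM]; apply: Tr_capt; first exact: d2_H.
exists (B Mn) => k /d2_H hk.
rewrite /cond; set m := idx k in hk *.
have hm : (m ^ 3 <= g k)%N by apply: (@idxP_P Pm k).
apply: leq_trans (HM m _) _; first by apply: leq_ltn_trans hk.
apply: leq_trans hm; rewrite (expnS m 2); apply: leq_mul => //; exact: ltnW.
Qed.

Lemma dir2 (G : set slalom) : covering in_C G ->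
  exists F : set slalom, covering (g_slalom g) F /\ (F #<= G)%card.
Proof.
apply: (@transfer _ _ (Tr idx cond) (code B)).
- by move=> S _; apply: d2_g.
- by move=> S x; apply: d2_cap.
Qed.
End Dir2.

Local Open Scope card_scope.

Theorem lemma10p6 (g : nat -> nat)
  (g_pos : forall k, (0 < g k)%N)
  (g_inf : forall m, exists N, forall k, (N <= k)%N -> (m <= g k)%N) :
  (forall F : set slalom, covering (g_slalom g) F ->
     exists G : set slalom, covering in_C G /\ G #<= F) /\
  (forall G : set slalom, covering in_C G ->
     exists F : set slalom, covering (g_slalom g) F /\ F #<= G).
Proof.
split; [exact: dir1 | exact: dir2].
Qed.
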